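(* Let $D_\ast,E_\ast$ be chain complexes, $j$ an integer and $\varphi:D_\ast\to E_\ast$ a chain homotopy equivalence such that $\varphi_i:D_i\to E_i$ is an isomorphism for all $i\leq j-1$. Then there is a chain homotopy inverse $\psi:E_\ast\to D_\ast$ of $\varphi$ with $\psi_i=\varphi_i^{-1}$ for all $i\leq j-1$. *)

(* Defs.v *)
From HB Require Import structures.
From mathcomp Require Import all_boot all_order all_algebra.
Set Implicit Arguments. Unset Strict Implicit. Unset Printing Implicit Defensive.
Import Order.TTheory GRing.Theory Num.Theory.
Local Open Scope ring_scope.

(* A chain complex: modules C_i (i : int) with differentials
   d_i : C_(i+1) -> C_i (i.e. the differential out of degree i+1) and d o d = 0. *)
Record chain_complex (R : nzRingType) := ChainComplex {
  cobj : int -> lmodType R;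
  cdiff : forall i : int, {linear cobj (i + 1) -> cobj i};
  cdiff2 : forall (i : int) (x : cobj (i + 1 + 1)), cdiff i (cdiff (i + 1) x) = 0
}.

Definition is_chain_map (R : nzRingType) (C D : chain_complex R)
  (f : forall i : int, cobj C i -> cobj D i) : Prop :=
  forall (i : int) (x : cobj C (i + 1)), f i (cdiff C i x) = cdiff D i (f (i + 1) x).

(* f and g are chain homotopic: there are R-linear h_i : C_i -> D_(i+1) with
   f_n - g_n = d h_n + h_(n-1) d in every degree n (written n = i+1). *)
Definition chain_homotopic (R : nzRingType) (C D : chain_complex R)
  (f g : forall i : int, cobj C i -> cobj D i) : Prop :=
  exists h : forall i : int, {linear cobj C i -> cobj D (i + 1)},
    forall (i : int) (x : cobj C (i + 1)),
      f (i + 1) x - g (i + 1) x = cdiff D (i + 1) (h (i + 1) x) + h i (cdiff C i x).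

Definition id_chain (R : nzRingType) (C : chain_complex R) :
  forall i : int, cobj C i -> cobj C i := fun i x => x.

Definition comp_chain (R : nzRingType) (C D E : chain_complex R)
  (g : forall i : int, cobj D i -> cobj E i) (f : forall i : int, cobj C i -> cobj D i) :
  forall i : int, cobj C i -> cobj E i := fun i x => g i (f i x).

Definition chain_homotopy_inverse (R : nzRingType) (C D : chain_complex R)
  (phi : forall i : int, {linear cobj C i -> cobj D i})
  (psi : forall i : int, {linear cobj D i -> cobj C i}) : Prop :=
  [/\ is_chain_map (fun i => psi i),
      chain_homotopic (comp_chain (fun i => psi i) (fun i => phi i)) (@id_chain R C)
    & chain_homotopic (comp_chain (fun i => phi i) (fun i => psi i)) (@id_chain R D)].

Definition chain_homotopy_equivalence (R : nzRingType) (C D : chain_complex R)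
  (phi : forall i : int, {linear cobj C i -> cobj D i}) : Prop :=
  is_chain_map (fun i => phi i) /\
  exists psi : forall i : int, {linear cobj D i -> cobj C i}, chain_homotopy_inverse phi psi.

(* Main.v *)
Require Import Defs.
From Stdlib Require Import ClassicalEpsilon.
From HB Require Import structures.
From mathcomp Require Import all_boot all_order all_algebra.
Import Order.TTheory GRing.Theory Num.Theory.
Local Open Scope ring_scope.

Section MkLin.
Variables (R : pzRingType) (U V : lmodType R) (f : U -> V) (Hf : linear f).
Definition mkfun := f.
HB.instance Definition _ := GRing.isLinear.Build R U V *:%R mkfun Hf.
Definition mkLin : {linear U -> V} := mkfun.
Lemma mkLinE x : mkLin x = f x. Proof. by []. Qed.
End MkLin.
Arguments mkLin {R U V f}.
Arguments mkLinE {R U V f}.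

Definition tr (T : int -> Type) (a b : int) (e : a = b) (x : T a) : T b :=
  eq_rect a T x b e.
Arguments tr {T a b}.

Lemma tr_linear (R : nzRingType) (C : chain_complex R) a b (e : a = b) :
  linear (@tr (cobj C) a b e).
Proof. by case: b / e. Qed.

Lemma lin3 (R:pzRingType)(V:lmodType R) a (g1 g2 d1 d2 k1 k2 : V): (a*:g1+g2) - (a*:d1+d2) - (a*:k1+k2) = a*:(g1-d1-k1) + (g2-d2-k2).
Proof. by rewrite !scalerBr !opprD (addrACA (a *: g1)) (addrACA (a *: g1 - _)). Qed.

Lemma L2 (V : zmodType) (a b c x p q : V): a - x = p + q -> a - b - c - x = (p - b) + (q - c).
Proof. by move=> e; rewrite (addrAC _ (-c)) (addrAC a) e (addrAC p) addrA. Qed.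

Lemma L3 (V : zmodType) (a b b' c x p q : V): b' = b -> a - x = p + q -> a - b' - c - x = (p - b) + (q - c).
Proof. by move=> -> e; rewrite (addrAC _ (-c)) (addrAC a) e (addrAC p) addrA. Qed.

Lemma lin2 (R:pzRingType)(V:lmodType R) a (p q r s : V): (a*:p+q) - (a*:r+s) = a*:(p-r) + (q-s).
Proof. by rewrite scalerBr opprD addrACA. Qed.

Section Main.
Variables (R : nzRingType) (D E : chain_complex R) (j : int)
 (phi : forall i, {linear cobj D i -> cobj E i})
 (g : forall i, {linear cobj E i -> cobj D i})
 (h : forall i, {linear cobj D i -> cobj D (i+1)})
 (k : forall i, {linear cobj E i -> cobj E (i+1)}).
Hypotheses (phic : forall i x, phi i (cdiff D i x) = cdiff E i (phi (i+1) x))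
 (gc : forall i x, g i (cdiff E i x) = cdiff D i (g (i+1) x))
 (hh : forall i x, g (i+1) (phi (i+1) x) - x = cdiff D (i+1) (h (i+1) x) + h i (cdiff D i x))
 (hk : forall i x, phi (i+1) (g (i+1) x) - x = cdiff E (i+1) (k (i+1) x) + k i (cdiff E i x))
 (hiso : forall i, i <= j - 1 -> bijective (phi i)).

Definition inv i : cobj E i -> cobj D i :=
  epsilon (inhabits (fun _ => 0)) (fun f => cancel (phi i) f /\ cancel f (phi i)).

Lemma invP i : i <= j - 1 -> cancel (phi i) (inv i) /\ cancel (inv i) (phi i).
Proof.
move=> hi; rewrite /inv.
apply: (@epsilon_spec _ (inhabits (fun _ : cobj E i => 0 : cobj D i)) (fun f => cancel (phi i) f /\ cancel f (phi i))).
by case: (hiso i hi) => f f1 f2; exists f.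
Qed.

Definition Hf i (y : cobj E i) : cobj D (i+1) :=
  if i <= j - 1 then h i (inv i y) else 0.

Lemma Hf_linear i : linear (@Hf i).
Proof.
move=> a x y; rewrite /Hf; case: ifP => hi; last by rewrite scaler0 addr0.
have [c1 c2] := invP i hi.
rewrite -{1}(c2 x) -{1}(c2 y) -linearP c1 linearP //.
Qed.

Definition H i : {linear cobj E i -> cobj D (i+1)} := mkLin (@Hf_linear i).

Definition G i (y : cobj E (i+1)) : cobj D (i+1) := H i (cdiff E i y).

Definition K n (y : cobj E n) : cobj D n :=
  @tr (cobj D) _ _ (subrK 1 n) (G (n-1) (@tr (cobj E) _ _ (esym (subrK 1 n)) y)).

Lemma G_cast m i (e : m + 1 = i + 1) y :
  @tr (cobj D) _ _ e (G m (@tr (cobj E) _ _ (esym e) y)) = G i y.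
Proof.
have E1 : m = i by apply: (addIr 1).
subst m; by rewrite (eq_irrelevance e erefl).
Qed.

Lemma KS i y : K (i+1) y = G i y.
Proof. exact: G_cast. Qed.

Lemma K_linear n : linear (@K n).
Proof.
move=> a x y; rewrite /K /G.
by rewrite (@tr_linear _ E) !linearP (@tr_linear _ D).
Qed.

Definition psif n (y : cobj E n) : cobj D n :=
  g n y - cdiff D n (H n y) - K n y.

Lemma psif_linear n : linear (@psif n).
Proof.
move=> a x y; rewrite /psif (K_linear n) linearP (linearP (H n)) linearP.
exact: lin3.
Qed.

Definition psi n : {linear cobj E n -> cobj D n} := mkLin (@psif_linear n).

Lemma psiS i y : psi (i+1) y = g (i+1) y - cdiff D (i+1) (H (i+1) y) - H i (cdiff E i y).
Proof. by rewrite mkLinE /psif KS. Qed.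

Lemma all_S (P : int -> Prop) : (forall i, P (i + 1)) -> forall i, P i.
Proof. by move=> HP i; have := HP (i - 1); rewrite subrK. Qed.

Lemma psi_chain : forall i x, psi i (cdiff E i x) = cdiff D i (psi (i+1) x).
Proof.
apply: (@all_S (fun i => forall x, psi i (cdiff E i x) = cdiff D i (psi (i+1) x))).
move=> i x; rewrite !psiS gc !linearB /= !cdiff2 linear0.
have L : forall (V : zmodType) (a b : V), a - b - 0 = a - 0 - b by move=> V a b; rewrite !subr0.
exact: L. exact: Hf_linear.
Qed.

Lemma psi_cancel : forall i, i <= j - 1 -> cancel (phi i) (psi i).
Proof.
apply: (@all_S (fun i => i <= j - 1 -> cancel (phi i) (psi i))).
move=> i hi x; rewrite psiS -phic.
have hi' : i <= j - 1 by apply: le_trans hi; rewrite lerDl.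
rewrite !mkLinE /Hf hi hi' (proj1 (invP (i+1) hi)) (proj1 (invP i hi')).
have /eqP := hh i x; rewrite subr_eq => /eqP ->.
by rewrite -addrA -opprD addrAC subrr add0r.
Qed.

Definition h'f i (x : cobj D i) : cobj D (i+1) := h i x - H i (phi i x).
Lemma h'f_linear i : linear (@h'f i).
Proof. by move=> a x y; rewrite /h'f (linearP (h i)) (linearP (phi i)) (linearP (H i)) lin2. Qed.
Definition h' i : {linear cobj D i -> cobj D (i+1)} := mkLin (@h'f_linear i).
Lemma h'E i x : h' i x = h i x - H i (phi i x). Proof. by []. Qed.

Definition k'f i (y : cobj E i) : cobj E (i+1) := k i y - phi (i+1) (H i y).
Lemma k'f_linear i : linear (@k'f i).
Proof. by move=> a x y; rewrite /k'f (linearP (k i)) (linearP (H i)) (linearP (phi (i+1))) lin2. Qed.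
Definition k' i : {linear cobj E i -> cobj E (i+1)} := mkLin (@k'f_linear i).
Lemma k'E i y : k' i y = k i y - phi (i+1) (H i y). Proof. by []. Qed.

Lemma hom1 i x : psi (i+1) (phi (i+1) x) - x = cdiff D (i+1) (h' (i+1) x) + h' i (cdiff D i x).
Proof. rewrite psiS -phic !h'E (raddfB (cdiff D (i+1))). apply: L2. exact: hh. Qed.

Lemma hom2 i y : phi (i+1) (psi (i+1) y) - y = cdiff E (i+1) (k' (i+1) y) + k' i (cdiff E i y).
Proof.
rewrite psiS (raddfB (phi (i+1))) (raddfB (phi (i+1))) !k'E (raddfB (cdiff E (i+1))).
apply: L3; [exact: phic | exact: hk].
Qed.

End Main.


Theorem lemma6p5 (R : nzRingType) (D E : chain_complex R) (j : int)
  (phi : forall i : int, {linear cobj D i -> cobj E i})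
  (hphi : chain_homotopy_equivalence phi)
  (hiso : forall i : int, i <= j - 1 -> bijective (phi i)) :
  exists psi : forall i : int, {linear cobj E i -> cobj D i},
    chain_homotopy_inverse phi psi /\
    (forall i : int, i <= j - 1 -> cancel (phi i) (psi i) /\ cancel (psi i) (phi i)).
Proof.
case: hphi => phic [g [gc [h hh] [k hk]]].
exists (@psi R D E j phi g h hiso); split; first split.
- move=> i x; apply: psi_chain; exact: gc.
- exists (@h' R D E j phi h hiso) => i x; apply: hom1; [exact: phic | exact: hh].
- exists (@k' R D E j phi h k hiso) => i x; apply: hom2; [exact: phic | exact: hk].
- move=> i hi.
  have c1 : cancel (phi i) (@psi R D E j phi g h hiso i) by apply: psi_cancel; [exact: phic | exact: hh | exact: hi].
  split=> //.
  case: (hiso i hi) => f f1 f2 y.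
  by rewrite -[y]f2 c1.
Qed.
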